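(* Let $C=(C_1,\dots,C_m)$ be a quantum circuit whose gates carry the distinct labels $1,\dots,m$ (gate $C_k$ has label $k$). Let $C'$ be a circuit obtained from $C$ by a finite sequence of swaps of adjacent gates whose unitaries commute, where each gate keeps its label from $C$. Let $G$ be the canonical form of $C$ and $G'$ the canonical form of $C'$, where in constructing $G'$ each vertex is labeled by the label (from $C$) of the gate it corresponds to. Then $G$ and $G'$ are the same labeled directed acyclic graph.
   Context: A gate is a unitary operation acting on a specified ordered list of qubits; we identify it with the unitary it induces on the full $n$-qubit space. Two gates $A,B$ commute if their unitaries satisfy $[A,B]=AB-BA=0$. A circuit is a finite sequence of gates $(C_1,\dots,C_m)$ (applied left to right). The canonical form of a circuit $D=(D_1,\dots,D_m)$ (each gate carrying a label) is the directed graph built as follows: start with the empty graph; for $t=1,\dots,m$: mark every vertex already in the graph as ''reachable''; add a new vertex for gate $D_t$ (labeled with $D_t$'s label); then for $s=t-1,t-2,\dots,1$ in this order, if the vertex of $D_s$ is marked reachable and $[D_s,D_t]\neq 0$, add a directed edge from the vertex of $D_s$ to the vertex of $D_t$ and mark every predecessor of the vertex of $D_s$ (every vertex from which there is a directed path to it in the current graph) as not reachable. *)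

(* Defs.v *)
From HB Require Import structures.
From mathcomp Require Import all_boot all_order all_algebra all_field.
Set Implicit Arguments. Unset Strict Implicit. Unset Printing Implicit Defensive.
Import GRing.Theory Num.Theory.
Local Open Scope ring_scope.

(* A gate on n qubits, identified with its unitary on the full 2^n-dim space. *)
Definition unitary (n : nat) (A : 'M[algC]_(2 ^ n)) : Prop :=
  A *m (map_mx Num.conj A)^T = 1%:M.

(* Gates are labelled 0..m-1 ('I_m); C k is the gate with label k.
   commuteb C i j <=> [C i, C j] = 0. *)
Definition commuteb (n m : nat) (C : 'I_m -> 'M[algC]_(2 ^ n)) (i j : 'I_m) : bool :=
  C i *m C j == C j *m C i.

Local Open Scope nat_scope.

(* A circuit built from the labelled gates is a sequence of labels. *)
Definition adj_swap (m : nat) (comm : 'I_m -> 'I_m -> bool) (s s' : seq 'I_m) : Prop :=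
  exists (i : nat) (a b : 'I_m),
    [/\ nth a s i = a, nth a s i.+1 = b, i.+1 < size s, comm a b &
        s' = take i s ++ [:: b; a] ++ drop i.+2 s].

Inductive swap_reach (m : nat) (comm : 'I_m -> 'I_m -> bool) : seq 'I_m -> seq 'I_m -> Prop :=
  | sr_refl s : swap_reach comm s s
  | sr_step s1 s2 s3 : adj_swap comm s1 s2 -> swap_reach comm s2 s3 -> swap_reach comm s1 s3.

Definition edge_rel (m : nat) (E : {set 'I_m * 'I_m}) : rel 'I_m :=
  fun x y => (x, y) \in E.

Definition preds (m : nat) (E : {set 'I_m * 'I_m}) (v : 'I_m) : {set 'I_m} :=
  [set u | [exists w, ((u, w) \in E) && connect (edge_rel E) w v]].

Definition inner_step (m : nat) (comm : 'I_m -> 'I_m -> bool) (x : 'I_m)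
    (st : {set 'I_m} * {set 'I_m * 'I_m}) (p : 'I_m) : {set 'I_m} * {set 'I_m * 'I_m} :=
  let: (R, E) := st in
  if (p \in R) && ~~ comm p x then
    let E' := (p, x) |: E in (R :\: preds E' p, E')
  else (R, E).

(* Outer loop: pre = labels of gates already added (in order). *)
Fixpoint canon_go (m : nat) (comm : 'I_m -> 'I_m -> bool) (pre : seq 'I_m)
    (E : {set 'I_m * 'I_m}) (s : seq 'I_m) : {set 'I_m * 'I_m} :=
  match s with
  | [::] => E
  | x :: s' =>
      let E' := (foldl (inner_step comm x) ([set y in pre], E) (rev pre)).2 in
      canon_go comm (rcons pre x) E' s'
  end.

(* Canonical form of the circuit given by the label sequence s:
   (labelled vertex set, labelled edge set). Since labels are distinct,
   a vertex is identified with its label. *)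
Definition canonical_form (m : nat) (comm : 'I_m -> 'I_m -> bool) (s : seq 'I_m)
    : {set 'I_m} * {set 'I_m * 'I_m} :=
  ([set x in s], canon_go comm [::] set0 s).

(* Main.v *)
Require Import Defs.
From HB Require Import structures.
From mathcomp Require Import all_boot all_order all_algebra all_field.
From mathcomp Require Import zify.
Set Implicit Arguments. Unset Strict Implicit. Unset Printing Implicit Defensive.

Section Dep.
Variable m : nat.
Variable comm : 'I_m -> 'I_m -> bool.

Fixpoint depr (t : seq 'I_m) : rel 'I_m :=
  match t with
  | [::] => fun _ _ => false
  | x :: t' => fun u v => depr t' u v ||
      (v == x) && has (fun q => ~~ comm q x && ((u == q) || depr t' u q)) t'
  end.

Definition dep s := depr (rev s).

Lemma dep_nil u v : dep [::] u v = false.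
Proof. by []. Qed.

Lemma dep_rcons s x u v : dep (rcons s x) u v =
  dep s u v || (v == x) && has (fun q => ~~ comm q x && ((u == q) || dep s u q)) s.
Proof. by rewrite /dep rev_rcons /= has_rev. Qed.

Lemma dep_mem s u v : dep s u v -> (u \in s) && (v \in s).
Proof.
elim/last_ind: s u v => [//|s x IH] u v.
rewrite dep_rcons !mem_rcons !in_cons => /orP [/IH /andP [-> ->]|]; first by rewrite !orbT.
case/andP=> /eqP -> /hasP [q qs /andP [_ /orP [/eqP ->|/IH /andP [-> _]]]];
by rewrite ?qs eqxx !orbT.
Qed.

Lemma dep_index s u v : uniq s -> dep s u v -> index u s < index v s.
Proof.
elim/last_ind: s u v => [//|s x IH] u v.
rewrite rcons_uniq => /andP [xs us].
rewrite dep_rcons -!cats1 !index_cat => /orP [duv|].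
  by have /andP [-> ->] := dep_mem duv; apply: IH.
case/andP=> /eqP -> /hasP [q qs /andP [_ hq]].
have uin : u \in s by case/orP: hq => [/eqP ->//|/dep_mem /andP []].
by rewrite uin (negbTE xs) /= eqxx addn0 index_mem.
Qed.

Lemma dep_trans s u v w : uniq s -> dep s u v -> dep s v w -> dep s u w.
Proof.
elim/last_ind: s u v w => [//|s x IH] u v w.
rewrite rcons_uniq => /andP [xs us].
rewrite !dep_rcons => huv /orP [dvw|].
  case/orP: huv => [duv|/andP [/eqP vx _]]; first by rewrite (IH _ _ _ us duv dvw).
  by move: (dep_mem dvw); rewrite vx (negbTE xs).
case/andP=> wx /hasP [q qs /andP [cq hq]].
case/orP: huv => [duv|/andP [/eqP vx /hasP [q' q's /andP [_ hq']]]].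
  apply/orP; right; rewrite wx /=; apply/hasP; exists q => //; rewrite cq /=.
  case/orP: hq => [/eqP <-|dvq]; first by rewrite duv orbT.
  by rewrite (IH _ _ _ us duv dvq) orbT.
exfalso; case/orP: hq => [/eqP vq|dvq].
  by move: qs; rewrite -vq vx (negbTE xs).
by move: (dep_mem dvq); rewrite vx (negbTE xs).
Qed.


Definition Hs s : {set 'I_m * 'I_m} :=
  [set e | dep s e.1 e.2 && ~~ [exists c, dep s e.1 c && dep s c e.2]].

End Dep.

Section Hasse.
Variable T : finType.
Variable d : rel T.
Variable f : T -> nat.
Hypothesis hf : forall a b, d a b -> f a < f b.
Hypothesis dt : forall a b c, d a b -> d b c -> d a c.
Let Hr : rel T := fun a b => d a b && ~~ [exists c, d a c && d c b].

Lemma hasse_connect w v : connect Hr w v -> (w == v) || d w v.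
Proof.
move/connectP=> [p hp ->]; elim: p w hp => [|y p IH] w /=; first by rewrite eqxx.
case/andP=> /andP [dwy _] hp; case/orP: (IH y hp) => [/eqP <-|dy].
  by rewrite dwy orbT.
by rewrite (dt dwy dy) orbT.
Qed.

Lemma hasse_cover u v : d u v -> exists2 w, Hr u w & connect Hr w v.
Proof.
move: {2}(f v - f u) (leqnn (f v - f u)) => k.
elim: k u v => [|k IH] u v hk duv.
  by have := hf duv; lia.
case: (boolP [exists c, d u c && d c v]) => [/existsP [c /andP [duc dcv]]|hn].
  have h1 := hf duc; have h2 := hf dcv.
  have [w1 hw1 cw1] := IH c v ltac:(lia) dcv.
  have [w2 hw2 cw2] := IH u c ltac:(lia) duc.
  exists w2 => //; apply: connect_trans cw2 _.
  exact: connect_trans (connect1 hw1) cw1.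
by exists v; rewrite // /Hr duv hn.
Qed.

End Hasse.

Lemma connect_drop m (A Y : {set 'I_m * 'I_m}) x w p :
  (forall e, e \in Y -> e.2 = x) -> (forall e, e \in A :|: Y -> e.1 != x) ->
  p != x -> connect (edge_rel (A :|: Y)) w p -> connect (edge_rel A) w p.
Proof.
move=> hY hs px /connectP [s]; elim: s w => [|y s IH] w /=; first by move=> _ ->.
case/andP=> hwy hp hl.
case: (boolP ((w, y) \in A)) => hA.
  exact: connect_trans (connect1 hA) (IH y hp hl).
have yx : y = x.
  by move: hwy; rewrite /edge_rel in_setU (negbTE hA) /= => /hY.
case: s hp hl IH => [|z s] /=; first by move=> _ hl; rewrite hl yx eqxx in px.
by case/andP=> /hs /=; rewrite yx eqxx.
Qed.

Lemma preds_drop m (A Y : {set 'I_m * 'I_m}) x p u :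
  (forall e, e \in Y -> e.2 = x) -> (forall e, e \in A :|: Y -> e.1 != x) ->
  p != x -> (u \in preds (A :|: Y) p) = [exists w, ((u, w) \in A) && connect (edge_rel A) w p].
Proof.
move=> hY hs px; rewrite /preds inE; apply/existsP/existsP => [] [w /andP [huw hc]].
  have hc' := connect_drop hY hs px hc.
  exists w; rewrite hc' andbT.
  move: huw; rewrite in_setU => /orP [//|/hY /= wx].
  move: hc'; rewrite wx => /connectP [[|z s] /=]; first by move=> _ xp; rewrite xp eqxx in px.
  by case/andP=> hz _ _; have := hs (x, z); rewrite in_setU (hz : (x, z) \in A) /= eqxx => /(_ isT).
exists w; rewrite in_setU huw /=.
apply: connect_sub hc => a b hab; apply: connect1; by rewrite /edge_rel in_setU (hab : (a, b) \in A).
Qed.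

Section Swap.
Variable m : nat.
Variable comm : 'I_m -> 'I_m -> bool.
Hypothesis comm_sym : forall a b, comm a b = comm b a.

Lemma dep2 pre a b u v : a \notin pre -> comm a b ->
  dep comm (rcons (rcons pre a) b) u v =
  [|| dep comm pre u v,
      (v == a) && has (fun q => ~~ comm q a && ((u == q) || dep comm pre u q)) pre |
      (v == b) && has (fun q => ~~ comm q b && ((u == q) || dep comm pre u q)) pre].
Proof.
move=> apre cab; rewrite !dep_rcons has_rcons cab /= -orbA; congr (_ || (_ || _)).
congr (_ && _); apply: eq_in_has => q qp /=; rewrite dep_rcons.
have -> : (q == a) = false by apply/eqP=> qa; rewrite -qa qp in apre.
by rewrite orbF.
Qed.

Lemma dep_swap pre a b rest : uniq (pre ++ [:: a; b] ++ rest) -> comm a b ->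
  forall u v, dep comm (pre ++ [:: a; b] ++ rest) u v = dep comm (pre ++ [:: b; a] ++ rest) u v.
Proof.
elim/last_ind: rest => [|r y IH] hu cab u v.
  have E1 : forall x y, pre ++ [:: x; y] ++ [::] = rcons (rcons pre x) y.
    by move=> x z; rewrite cats0 -!cats1 -catA.
  have hn : (a \notin pre) && (b \notin pre).
    by move: hu; rewrite cats0 cat_uniq /= !negb_or => /and4P [_ /and3P [-> -> _] _ _].
  case/andP: hn => ha hb.
  rewrite !E1 (dep2 _ _ ha cab) (dep2 _ _ hb); last by rewrite comm_sym.
  by apply/idP/idP => /or3P [] ->; rewrite ?orbT.
have hu' : uniq (pre ++ [:: a; b] ++ r).
  by move: hu; rewrite -!rcons_cat rcons_uniq => /andP [].
rewrite -!rcons_cat !catA !dep_rcons -!catA IH //.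
congr (_ || _); congr (_ && _).
rewrite (@eq_has_r _ (pre ++ [:: a, b & r]) (pre ++ [:: b, a & r])); last first.
  by move=> z; rewrite !mem_cat !inE; congr (_ || _); rewrite orbCA.
by apply: eq_in_has => q _ /=; rewrite IH.
Qed.

End Swap.

Section Inner.
Variable m : nat.
Variable comm : 'I_m -> 'I_m -> bool.
Variable pre : seq 'I_m.
Variable x : 'I_m.
Hypothesis hu : uniq (rcons pre x).

Let D := dep comm pre.
Let T q := has (fun q0 => ~~ comm q0 x && ((q == q0) || D q q0)) pre.
Let Cov q := T q && ~~ [exists mm, D q mm && T mm].
Let Xs (r : seq 'I_m) := [set e : 'I_m * 'I_m | (e.2 == x) && (e.1 \in r) && Cov e.1].

Lemma xnpre : x \notin pre.
Proof. by move: hu; rewrite rcons_uniq => /andP []. Qed.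
Lemma upre : uniq pre.
Proof. by move: hu; rewrite rcons_uniq => /andP []. Qed.

Lemma T_mem q : T q -> q \in pre.
Proof. by case/hasP=> q0 q0p /andP [_ /orP [/eqP ->//|/dep_mem /andP []]]. Qed.

Lemma D_trans a b c : D a b -> D b c -> D a c.
Proof. exact: (dep_trans upre). Qed.

Lemma loc l p r q : pre = l ++ p :: r -> D p q -> q \in r.
Proof.
move=> hpre dpq; have := dep_index upre dpq; have /andP [_ qin] := dep_mem dpq.
have := upre; rewrite hpre cat_uniq /= => /and4P [_ /norP [pl _] _ _].
move: qin; rewrite hpre !index_cat (negbTE pl) /= eqxx addn0 mem_cat in_cons.
case: (boolP (q \in l)) => ql /=.
  by have := index_mem q l; rewrite ql => h _ h2; have := ltn_trans h h2; rewrite ltnn.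
by case: (q =P p) => [->|_] /=; [rewrite eqxx addn0 ltnn | move=> ->].
Qed.

Lemma key l p r (b : bool) : pre = l ++ p :: r ->
  b = ~~ has (fun q => Cov q && D p q) r -> b && ~~ comm p x = Cov p.
Proof.
move=> hpre ->; have pin : p \in pre by rewrite hpre mem_cat in_cons eqxx orbT.
apply/idP/idP.
  case/andP=> hn cp; rewrite /Cov.
  have Tp : T p by apply/hasP; exists p => //; rewrite cp eqxx.
  rewrite Tp /=; apply/negP => /existsP [m0 /andP [dm Tm]].
  set P := fun mm => D p mm && T mm.
  have Pm : P m0 by rewrite /P dm Tm.
  case: (arg_maxnP (fun mm => index mm pre) Pm) => b0 /andP [db Tb] hmax.
  move/hasP: hn; apply; exists b0; first exact: (loc hpre db).
  rewrite db andbT /Cov Tb /=; apply/negP => /existsP [c /andP [dbc Tc]].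
  have := hmax c; rewrite /P (D_trans db dbc) Tc => /(_ isT) hle.
  by have := dep_index upre dbc; rewrite ltnNge (hle : index c pre <= index b0 pre).
case/andP=> Tp hn; apply/andP; split.
  apply/negP => /hasP [q _ /andP [/andP [Tq _] dpq]].
  by move/existsP: hn; apply; exists q; rewrite dpq Tq.
case/hasP: Tp => q0 q0p /andP [cq0 /orP [/eqP ->//|dp]].
exfalso; move/existsP: hn; apply; exists q0; rewrite dp /=.
by apply/hasP; exists q0; rewrite // cq0 eqxx.
Qed.

Lemma preds_D p r : p \in pre -> (forall q, q \in Xs r -> q.1 \in pre) ->
  forall y, (y \in preds ((p, x) |: (Hs comm pre :|: Xs r)) p) = D y p.
Proof.
move=> pin hX y; rewrite setUCA (preds_drop (x := x)).
- apply/existsP/idP => [[w /andP [hyw hc]]|dyp].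
    move: hyw; rewrite inE /= => /andP [dyw _].
    have hc' : connect (fun a b => D a b && ~~ [exists c, D a c && D c b]) w p.
      by apply: etrans hc; apply: eq_connect => a b; rewrite /edge_rel inE.
    case/orP: (hasse_connect (@D_trans) hc') => [/eqP <-//|dwp].
    exact: D_trans dyw dwp.
  have [w hw hc] := hasse_cover (f := fun a => index a pre) (fun a b => @dep_index _ comm pre a b upre) dyp.
  exists w; rewrite inE hw /=.
  by apply: etrans hc; apply: eq_connect => a b; rewrite /edge_rel inE.
- by move=> e; rewrite !inE => /orP [/eqP -> //|/andP [/andP [/eqP -> _] _]].
- move=> e; rewrite !inE => /or3P [/andP [/dep_mem /andP [h _] _]|/eqP -> /=|he].
  + by apply/eqP=> ex; move: h; rewrite ex (negbTE xnpre).
  + by apply/eqP=> ex; move: pin; rewrite ex (negbTE xnpre).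
  + have h : e.1 \in pre by apply: hX; rewrite inE he.
    by apply/eqP=> ex; move: h; rewrite ex (negbTE xnpre).
- by apply/eqP=> ex; move: pin; rewrite ex (negbTE xnpre).
Qed.


Lemma Xs_mem r e : e \in Xs r -> e.1 \in pre.
Proof. by rewrite inE => /andP [_ /andP [/T_mem]]. Qed.

Lemma inv r l : pre = l ++ r ->
  let st := foldl (inner_step comm x) ([set y in pre], Hs comm pre) (rev r) in
  st.2 = Hs comm pre :|: Xs r /\
  forall y, y \in l -> (y \in st.1) = ~~ has (fun q => Cov q && D y q) r.
Proof.
elim: r l => [|p r IH] l /=.
  move=> hp; split; last by move=> y yl; rewrite inE hp cats0 yl.
  by apply/setP => e; rewrite !inE /= andbF orbF.
move=> hp; have hp' : pre = rcons l p ++ r by rewrite hp cat_rcons.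
rewrite rev_cons foldl_rcons.
move: (IH _ hp'); case: (foldl _ _ (rev r)) => R E /= [hE hR].
have pin : p \in pre by rewrite hp mem_cat in_cons eqxx orbT.
have hpR := hR p ltac:(by rewrite mem_rcons in_cons eqxx).
rewrite (key hp hpR); case: (boolP (Cov p)) => cp /=; split.
- apply/setP => -[e1 e2]; rewrite hE !inE /= xpair_eqE.
  case: (e1 =P p) => [->|_] /=; last by [].
  by case: (e2 =P x) => [->|_] /=; rewrite ?cp ?eqxx ?orbT ?andbT ?andbF ?orbF.
- move=> y yl; rewrite in_setD hE (preds_D pin (@Xs_mem r)) hR ?mem_rcons ?in_cons ?yl ?orbT //.
  by rewrite negb_or.
- apply/setP => -[e1 e2]; rewrite hE !inE /=.
  case: (e1 =P p) => [->|_] /=; last by [].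
  by rewrite (negbTE cp) !andbF orbF.
- by move=> y yl; rewrite hR ?mem_rcons ?in_cons ?yl ?orbT /= ?(negbTE cp).
Qed.


Lemma inner_final :
  (foldl (inner_step comm x) ([set y in pre], Hs comm pre) (rev pre)).2 = Hs comm (rcons pre x).
Proof.
have [-> _] := @inv pre [::] erefl.
have Dx a : D a x = false by apply/negP => /dep_mem /andP [_]; rewrite (negbTE xnpre).
have Dx' a : D x a = false by apply/negP => /dep_mem /andP []; rewrite (negbTE xnpre).
have Tx : T x = false by apply/negP => /T_mem; rewrite (negbTE xnpre).
have depx a b : dep comm (rcons pre x) a b = D a b || (b == x) && T a by rewrite dep_rcons.
apply/setP => -[u v]; rewrite !inE /= depx.
case: (v =P x) => [->|vx].
  have -> : [exists c, dep comm (rcons pre x) u c && dep comm (rcons pre x) c x] =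
            [exists c, D u c && T c].
    apply: eq_existsb => c; rewrite !depx Dx eqxx /=.
    by case: (c =P x) => [->|_]; rewrite ?Tx ?Dx' ?andbF ?orbF.
  rewrite (Dx u : dep comm pre u x = false) Dx /= /Cov.
  case: (boolP (T u)) => Tu /=; first by rewrite (T_mem Tu).
  by rewrite andbF.
have -> : [exists c, dep comm (rcons pre x) u c && dep comm (rcons pre x) c v] =
          [exists c, D u c && D c v].
  apply: eq_existsb => c; rewrite !depx; have -> : (v == x) = false by apply/eqP.
  by case: (c =P x) => [->|_] /=; rewrite ?Dx' ?andbF ?orbF.
by rewrite /= !orbF.
Qed.

End Inner.

Lemma canon_Hs m (comm : 'I_m -> 'I_m -> bool) s pre : uniq (pre ++ s) ->
  canon_go comm pre (Hs comm pre) s = Hs comm (pre ++ s).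
Proof.
elim: s pre => [|x s IH] pre hu /=; first by rewrite cats0.
have hu' : uniq (rcons pre x ++ s) by rewrite cat_rcons.
rewrite inner_final; last by move: hu'; rewrite cat_uniq => /andP [].
by rewrite IH // cat_rcons.
Qed.

Lemma canon_form_Hs m (comm : 'I_m -> 'I_m -> bool) s : uniq s ->
  canonical_form comm s = ([set x in s], Hs comm s).
Proof.
move=> hu; rewrite /canonical_form.
have -> : (set0 : {set 'I_m * 'I_m}) = Hs comm [::] by apply/setP => e; rewrite !inE.
by rewrite canon_Hs.
Qed.

Lemma Hs_ext m (comm : 'I_m -> 'I_m -> bool) s1 s2 :
  (forall u v, dep comm s1 u v = dep comm s2 u v) -> Hs comm s1 = Hs comm s2.
Proof.
move=> hd; apply/setP => -[u v]; rewrite !inE /= hd; congr (_ && ~~ _).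
by apply: eq_existsb => c; rewrite !hd.
Qed.

Lemma adj_inv m (comm : 'I_m -> 'I_m -> bool) (hs : forall a b, comm a b = comm b a) s1 s2 :
  adj_swap comm s1 s2 -> uniq s1 ->
  perm_eq s1 s2 /\ forall u v, dep comm s1 u v = dep comm s2 u v.
Proof.
move=> [i [a [b [ha hb hi cab ->]]]] hu.
have e1 : s1 = take i s1 ++ [:: a; b] ++ drop i.+2 s1.
  by rewrite -{1}(cat_take_drop i s1) (drop_nth a (ltnW hi)) (drop_nth a hi) ha hb.
move: e1 hu; move: (take i s1) (drop i.+2 s1) => P R -> hu; split.
  have hab : perm_eq ([:: a] ++ [:: b]) [:: b; a] by rewrite perm_catC.
  by apply: perm_cat (perm_refl _) (perm_cat hab (perm_refl _)).
exact: dep_swap.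
Qed.

Lemma reach_inv m (comm : 'I_m -> 'I_m -> bool) (hs : forall a b, comm a b = comm b a) s1 s2 :
  swap_reach comm s1 s2 -> uniq s1 ->
  perm_eq s1 s2 /\ forall u v, dep comm s1 u v = dep comm s2 u v.
Proof.
elim=> [s|t1 t2 t3 ha _ IH] hu; first by split.
have [p12 d12] := adj_inv hs ha hu.
have [p23 d23] := IH ltac:(by rewrite -(perm_uniq p12)).
split; first exact: perm_trans p12 p23.
by move=> u v; rewrite d12 d23.
Qed.

Theorem mainTheorem1 (n m : nat) (C : 'I_m -> 'M[algC]_(2 ^ n))
    (HU : forall k, unitary (C k)) (C' : seq 'I_m)
    (HC' : swap_reach (commuteb C) (enum 'I_m) C') :
  canonical_form (commuteb C) C' = canonical_form (commuteb C) (enum 'I_m).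
Proof.
have hs : forall a b, commuteb C a b = commuteb C b a by move=> a b; rewrite /commuteb eq_sym.
have hu := enum_uniq 'I_m.
have [hp hd] := reach_inv hs HC' hu.
rewrite !canon_form_Hs //; last by rewrite -(perm_uniq hp).
congr (_, _); last by apply: Hs_ext => u v; rewrite hd.
by apply/setP => y; rewrite !inE (perm_mem hp).
Qed.
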